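(* Let $T$ and $T'$ be two proper caterpillars with the same $U$-polynomial. Then for any $\beta\in\Phi(T)$ and $\beta'\in\Phi(T')$, $\mathcal{L}(\beta,\mathbf{x})=\mathcal{L}(\beta',\mathbf{x})$.
   Context: Let $\mathbf{x}=x_1,x_2,\ldots$ be commuting indeterminates and $\mathbf{x}_\lambda=x_{\lambda_1}\cdots x_{\lambda_l}$ for a partition $\lambda$. For a tree $T=(V,E)$, $U_T(\mathbf{x})=\sum_{A\subseteq E}\mathbf{x}_{\lambda(A)}$, where $\lambda(A)$ is the partition of $|V|$ formed by the component sizes of $(V,A)$. A composition is a finite nonempty sequence of positive integers; its type $\lambda(\alpha)$ is its parts sorted decreasingly; $\alpha\succeq\beta$ ($\alpha$ is a coarsening of $\beta$) if $\alpha$ arises from $\beta$ by summing blocks of consecutive parts; $\mathcal{L}(\beta,\mathbf{x})=\sum_{\alpha\succeq\beta}\mathbf{x}_{\lambda(\alpha)}$. A caterpillar is a tree whose internal vertices induce a non-trivial path (the spine); it is proper if every internal vertex is adjacent to a leaf. For a proper caterpillar with spine $v_1\cdots v_k$, $\beta_i$ is $1$ plus the number of leaves adjacent to $v_i$, and $\Phi(T)=\{\beta_1\cdots\beta_k,\ \beta_k\cdots\beta_1\}$. *)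

(* Defs.v *)
From mathcomp Require Import all_boot.
Set Implicit Arguments. Unset Strict Implicit. Unset Printing Implicit Defensive.

Section Graphs.
Variables (V : finType) (e : rel V).

Definition simple_graph : Prop := symmetric e /\ irreflexive e.

Definition acyclic : Prop :=
  ~ exists (x : V) (p : seq V),
      [/\ uniq (x :: p), 2 <= size p, path e x p & e (last x p) x].

Definition is_tree : Prop := (forall x y : V, connect e x y) /\ acyclic.

Definition edges : {set {set V}} := [set [set x; y] | x in [set: V], y in [set z | e x z]].

Definition sub_rel (A : {set {set V}}) : rel V := fun x y => [set x; y] \in A.

Definition components (A : {set {set V}}) : {set {set V}} :=
  [set [set y | connect (sub_rel A) x y] | x : V].

Definition lambdaA (A : {set {set V}}) : seq nat :=
  sort geq [seq #|C| | C : {set V} <- enum (components A)].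

(* U_T(x) = sum_{A subset E} x_{lambda(A)}, represented by its coefficient
   function: coefficient of the monomial x_la is #{A subset E | lambda(A) = la}. *)
Definition Ucoef (la : seq nat) : nat :=
  #|[set A in powerset edges | lambdaA A == la]|.

Definition deg (v : V) : nat := #|[set w | e v w]|.
Definition leaf (v : V) : bool := deg v == 1.
Definition internal (v : V) : bool := 1 < deg v.

Definition is_spine (s : seq V) : Prop :=
  [/\ uniq s, s != [::], (forall v, (v \in s) = internal v) &
      forall (x0 : V) (i j : nat), i < size s -> j < size s ->
        e (nth x0 s i) (nth x0 s j) = (i.+1 == j) || (j.+1 == i)].

Definition caterpillar : Prop := exists s, is_spine s.

Definition proper_caterpillar : Prop :=
  forall v, internal v -> exists w, e v w && leaf w.

Definition beta (s : seq V) : seq nat :=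
  [seq #|[set w | e v w & leaf w]|.+1 | v <- s].

(* Phi(T) = { beta_1..beta_k , beta_k..beta_1 }: the beta-words of the two
   orientations of the spine. *)
Definition Phi (b : seq nat) : Prop := exists s, is_spine s /\ b = beta s.

End Graphs.

Fixpoint coarsens (alpha b : seq nat) : bool :=
  match alpha with
  | [::] => b == [::]
  | a :: alpha' =>
      has (fun k => (sumn (take k b) == a) && coarsens alpha' (drop k b))
          (iota 1 (size b))
  end.

(* all sequences of length <= len with entries <= bound (every coarsening of
   b lies among those with len = size b, bound = sumn b) *)
Fixpoint bounded_seqs (len bound : nat) : seq (seq nat) :=
  match len with
  | 0 => [:: [::]]
  | l.+1 => [::] :: [seq a :: s | a <- iota 0 bound.+1, s <- bounded_seqs l bound]
  end.

(* L(b, x) = sum_{alpha coarsening of b} x_{lambda(alpha)}, via its coefficient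
   function: coefficient of x_la = number of distinct alpha >= b with
   sorted-decreasing type la. *)
Definition Lcoef (b : seq nat) (la : seq nat) : nat :=
  count (fun alpha => coarsens alpha b && (sort geq alpha == la))
        (undup (bounded_seqs (size b) (sumn b))).

(* Main.v *)
Require Import Defs.
From mathcomp Require Import all_boot zify.
Set Implicit Arguments. Unset Strict Implicit. Unset Printing Implicit Defensive.

Definition addh (x : nat) (r : seq nat) :=
  if r is y :: r' then (x + y) :: r' else [:: x].

Fixpoint blocks (b : seq nat) (c : seq bool) : seq nat :=
  match b with
  | [::] => [::]
  | x :: b' => if head false c then x :: blocks b' (behead c)
               else addh x (blocks b' (behead c))
  end.

Lemma blocks_nil b c : b != [::] -> blocks b c != [::].
Proof.
case: b => [//|x b] _ /=; case: ifP => //.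
by rewrite /addh; case: (blocks _ _).
Qed.

Lemma coarsens_cons a al x b :
  coarsens (a :: al) (x :: b) =
  ((x == a) && coarsens al b) || ((x <= a) && coarsens ((a - x) :: al) b).
Proof.
rewrite /=; congr (_ || _); first by rewrite take0 drop0 addn0.
rewrite -[2]/(1 + 1) iotaDl has_map /preim /=.
case: (leqP x a) => Hxa /=.
  apply: eq_has => k /=; rewrite -[in LHS](subnK Hxa) addnC eqn_add2r; done.
apply/hasP => -[k _ /andP[/eqP H _]].
by move: Hxa; rewrite -H ltnNge leq_addr.
Qed.

Lemma coarsensP al b :
  reflect (exists c : seq bool, size c = (size b).-1 /\ al = blocks b c)
          (coarsens al b).
Proof.
elim: b al => [|x b IH] al.
  case: al => [|a al] /=; first by apply: ReflectT; exists [::].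
  by apply: ReflectF => -[c [_]].
case: al => [|a al].
  apply: ReflectF => -[c [_ /esym/eqP]]; by rewrite (negbTE (blocks_nil c _)).
rewrite coarsens_cons; apply: (iffP idP).
  case/orP => /andP[H1 /IH [c' [Hs Hal]]].
    rewrite (eqP H1) Hal.
    case: b IH Hs Hal => [|y b] IH Hs Hal.
      by exists [::].
    by exists (true :: c'); rewrite /= Hs.
  exists (false :: c').
  case: b IH Hs Hal => [|y b] IH Hs Hal; first by [].
  split; first by rewrite /= Hs.
  change (a :: al = addh x (blocks (y :: b) c')).
  by rewrite -Hal /= subnKC.
move=> [c [Hs]].
case: b IH Hs => [|y b] IH Hs.
  case: c Hs => //= _ [-> ->]; by rewrite eqxx.
case: c Hs => [//|h c] [Hs] H.
have : a :: al = if h then x :: blocks (y :: b) c else addh x (blocks (y :: b) c).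
  by rewrite H; case: (h).
clear H; case: h => [[-> ->]|].
  rewrite eqxx; apply/orP; left; apply/IH; by exists c; rewrite /= Hs.
case E: (blocks (y :: b) c) => [|z r].
  by move: (blocks_nil c (isT : y :: b != [::])); rewrite E.
move=> [-> ->]; apply/orP; right; rewrite leq_addr addKn.
by apply/IH; exists c; rewrite E /= Hs.
Qed.

Lemma sumn_blocks b c : sumn (blocks b c) = sumn b.
Proof.
elim: b c => [//|x b IH] c /=; case: ifP => _ /=; first by rewrite IH.
rewrite -(IH (behead c)); case: (blocks _ _) => //= y r; by rewrite addnA.
Qed.

Lemma size_blocks b c : size (blocks b c) <= size b.
Proof.
elim: b c => [//|x b IH] c /=; case: ifP => _ /=; first by rewrite ltnS IH.
have := IH (behead c); case: (blocks _ _) => //= y r H; exact: ltnW.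
Qed.

Lemma blocks_ge n b c : all (fun x => n <= x) b -> all (fun x => n <= x) (blocks b c).
Proof.
elim: b c => [//|x b IH] c /= /andP[Hx Hb]; case: ifP => _ /=.
  by rewrite Hx IH.
have := IH (behead c) Hb; case: (blocks _ _) => /= [|y r]; first by rewrite Hx.
by case/andP => Hy ->; rewrite (leq_trans Hy) ?leq_addl.
Qed.

Lemma blocks_inj b c1 c2 : all (fun x => 0 < x) b ->
  size c1 = (size b).-1 -> size c2 = (size b).-1 ->
  blocks b c1 = blocks b c2 -> c1 = c2.
Proof.
elim: b c1 c2 => [|x b IH] c1 c2 /=.
  by case: c1 => //; case: c2.
case/andP=> Hx Hb.
case: b IH Hb => [|y b] IH Hb.
  by case: c1 => //; case: c2.
case: c1 => [//|h1 c1]; case: c2 => [//|h2 c2] [H1] [H2] E.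
have : (if h1 then x :: blocks (y :: b) c1 else addh x (blocks (y :: b) c1)) =
       (if h2 then x :: blocks (y :: b) c2 else addh x (blocks (y :: b) c2)).
  by move: E; case: (h1); case: (h2).
clear E.
have Hp := blocks_ge c1 Hb; have Hp2 := blocks_ge c2 Hb.
have N1 := blocks_nil c1 (isT : y :: b != [::]).
have N2 := blocks_nil c2 (isT : y :: b != [::]).
have IH' := IH c1 c2 Hb H1 H2.
move: Hp Hp2 N1 N2 IH'.
case: (blocks (y :: b) c1) => [//|z1 r1]; case: (blocks (y :: b) c2) => [//|z2 r2].
move=> /= /andP[Hz1 _] /andP[Hz2 _] _ _ IH'.
case: h1; case: h2 => //= E.
- by case: E => E1 E2; rewrite IH' // E1 E2.
- case: E => E _; lia.
- case: E => E _; lia.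
- case: E => /eqP; rewrite eqn_add2l => /eqP E1 E2.
  by rewrite IH' // E1 E2.
Qed.

Lemma bounded_in (al : seq nat) len bound :
  size al <= len -> all (fun a => a <= bound) al -> al \in bounded_seqs len bound.
Proof.
elim: len al => [|l IH] [|a al] //=.
move=> Hs /andP[Ha Hal].
change (a :: al \in [::] :: [seq a :: s | a <- iota 0 bound.+1, s <- bounded_seqs l bound]).
rewrite in_cons; apply/orP; right.
apply: (allpairs_f (fun a s => a :: s)); last exact: IH.
by rewrite mem_iota add0n ltnS.

Qed.

Lemma all_le_sumn (s : seq nat) : all (fun a => a <= sumn s) s.
Proof.
elim: s => //= x s IH; rewrite leq_addr /=.
apply: sub_all IH => a H; exact: leq_trans H (leq_addl _ _).
Qed.

Lemma Lcoef_card b la : all (fun x => 0 < x) b ->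
  Lcoef b la = #|[set c : ((size b).-1).-tuple bool | sort geq (blocks b c) == la]|.
Proof.
move=> Hb.
rewrite /Lcoef.
set L := undup _.
set S := [seq blocks b (tval c) | c <- enum {: ((size b).-1).-tuple bool}].
have uS : uniq S.
  rewrite map_inj_in_uniq ?enum_uniq // => c1 c2 _ _ E.
  apply: val_inj; apply: blocks_inj E => //; by rewrite size_tuple.
have Hp : perm_eq [seq x <- L | coarsens x b] S.
  apply: uniq_perm; first by rewrite filter_uniq // undup_uniq.
    done.
  move=> al; rewrite mem_filter mem_undup.
  apply/andP/mapP.
    case=> /coarsensP [c [Hs ->]] _.
    exists (Tuple (introT eqP Hs)); by [rewrite mem_enum|].
  case=> c _ ->; split; first by apply/coarsensP; exists c; rewrite size_tuple.
  apply: bounded_in; first exact: size_blocks.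
  by rewrite -(sumn_blocks b c); apply: all_le_sumn.
have -> : count (fun al => coarsens al b && (sort geq al == la)) L =
   count (fun al => sort geq al == la) [seq x <- L | coarsens x b].
  by rewrite count_filter; apply: eq_count => x; rewrite /= andbC.
rewrite ((permP Hp) _) count_map cardE -size_filter.
rewrite /enum_mem -enumT filter_map size_map; congr size.
apply: eq_filter => c /=; by rewrite in_set.
Qed.

Definition blocksum (b : seq nat) (c : seq bool) (j : nat) :=
  \sum_(0 <= i < size b) (if count id (take i c) == j then nth 0 b i else 0).

Lemma takeS_count (c : seq bool) i :
  count id (take i.+1 c) = head false c + count id (take i (behead c)).
Proof. by case: c. Qed.

Lemma nth_addh x B j : nth 0 (addh x B) j = (if j == 0 then x else 0) + nth 0 B j.
Proof. by case: B => [|y r]; case: j => [|[|j]] //=; rewrite ?addn0. Qed.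

Lemma nth_blocks b c j : nth 0 (blocks b c) j = blocksum b c j.
Proof.
rewrite /blocksum; elim: b c j => [|x b IH] c j /=.
  by rewrite big_geq // nth_nil.
rewrite big_nat_recl // take0 /=.
under eq_bigr => i _ do rewrite takeS_count.
case: ifP => Hh.
  case: j => [|j] /=.
    by rewrite big1 ?addn0 // => i _; rewrite add1n.
  by rewrite add0n IH; apply: eq_bigr => i _; rewrite add1n eqSS.
by rewrite nth_addh IH eq_sym; congr (_ + _); apply: eq_bigr => i _.
Qed.

Lemma size_blocks_eq b c : b != [::] ->
  size (blocks b c) = (count id (take (size b).-1 c)).+1.
Proof.
elim: b c => [//|x b IH] c _.
case: b IH => [|y b] IH.
  by rewrite /= take0; case: ifP.
have -> : (size [:: x, y & b]).-1 = (size b).+1 by [].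
rewrite takeS_count.
have -> : blocks [:: x, y & b] c = if head false c then x :: blocks (y :: b) (behead c)
              else addh x (blocks (y :: b) (behead c)) by [].
have := IH (behead c) isT.
have := blocks_nil (behead c) (isT : y :: b != [::]).
case: (blocks (y :: b) (behead c)) => [//|z r] _ /= H.
by case: ifP => /= _; rewrite H.
Qed.

Lemma blocksE b c : b != [::] -> size c = (size b).-1 ->
  blocks b c = [seq blocksum b c j | j <- iota 0 (count id c).+1].
Proof.
move=> Hb Hc.
have Hs : size (blocks b c) = (count id c).+1 by rewrite size_blocks_eq // -Hc take_size.
apply: (@eq_from_nth _ 0); first by rewrite size_map size_iota.
move=> j; rewrite Hs => Hj.
by rewrite nth_blocks (nth_map 0) ?size_iota // nth_iota.
Qed.

Lemma count_take_surj (c : seq bool) j : j <= count id c ->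
  exists2 i, i <= size c & count id (take i c) = j.
Proof.
elim: c j => [|h t IH] j /=.
  by rewrite leqn0 => /eqP ->; exists 0.
case: j => [|j] H; first by exists 0; rewrite ?take0.
case: h H => /= H.
  have [i Hi Hc] := IH j H; exists i.+1 => //=; by rewrite Hc.
have [i Hi Hc] := IH j.+1 H; exists i.+1 => //=; by rewrite Hc.
Qed.


Lemma set2_eqP (T : finType) (a b x y : T) :
  [set a; b] = [set x; y] -> (a = x /\ b = y) \/ (a = y /\ b = x).
Proof.
move=> E.
have Ha : a \in [set x; y] by rewrite -E !inE eqxx.
have Hb : b \in [set x; y] by rewrite -E !inE eqxx orbT.
have Hx : x \in [set a; b] by rewrite E !inE eqxx.
have Hy : y \in [set a; b] by rewrite E !inE eqxx orbT.
move: Ha Hb Hx Hy; rewrite !inE.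
by do 4! case/orP=> /eqP ?; subst; auto.
Qed.

Lemma closed_conn (T : finType) (r : rel T) (P : pred T) x y :
  (forall a b, r a b -> P a -> P b) -> P x -> connect r x y -> P y.
Proof.
move=> HP Px /connectP [p Hp ->]; elim: p x Px Hp => //= z p IH x Px /andP[Hxz Hp].
by apply: IH (HP _ _ Hxz Px) Hp.
Qed.

Lemma minnSn n : minn n n.+1 = n. Proof. by apply/minn_idPl. Qed.
Lemma minSnn n : minn n.+1 n = n. Proof. by apply/minn_idPr. Qed.

Section Cat.
Variables (V : finType) (e : rel V).
Hypothesis Hsg : simple_graph e.
Hypothesis Ht : is_tree e.
Variable s : seq V.
Hypothesis Hs : is_spine e s.
Variable x0 : V.

Lemma eC x y : e x y = e y x.
Proof. by case: Hsg => H _; rewrite H. Qed.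
Lemma eirr x : e x x = false.
Proof. by case: Hsg => _ H; rewrite H. Qed.

Lemma uniq_s : uniq s. Proof. by case: Hs. Qed.
Lemma s_nil : s != [::]. Proof. by case: Hs. Qed.
Lemma in_s v : (v \in s) = internal e v. Proof. by case: Hs => _ _ H _; rewrite H. Qed.
Lemma s_edge i j : i < size s -> j < size s ->
  e (nth x0 s i) (nth x0 s j) = (i.+1 == j) || (j.+1 == i).
Proof. by case: Hs => _ _ _ H; apply: H. Qed.

Definition sv i := nth x0 s i.
Definition parent x := odflt x [pick u | e x u].
Definition idx x := if x \in s then index x s else index (parent x) s.

Lemma exists_s : exists v, v \in s.
Proof. by move: s_nil; case: s => // v r _; exists v; rewrite inE eqxx. Qed.

Lemma deg_notin x : x \notin s -> deg e x = 1.
Proof.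
rewrite in_s /internal -leqNgt => H.
apply/eqP; rewrite eqn_leq H /= lt0n; apply/negP => /eqP/cards0_eq H0.
have [v Hv] := exists_s.
have : v == x.
  apply: (@closed_conn _ e (pred1 x) x); last by case: Ht => C _; apply: C.
    move=> a b Hab /eqP Ha; subst a.
    have Hb : b \in [set w | e x w] by rewrite inE.
    by rewrite H0 inE in Hb.
  by rewrite /= eqxx.
move/eqP => Hvx; subst v.
by move: Hv; rewrite in_s /internal /deg H0 cards0.
Qed.

Lemma parent_spec x : x \notin s -> e x (parent x) /\ forall u, e x u -> u = parent x.
Proof.
move=> /deg_notin; rewrite /deg => /eqP/cards1P [u Hu].
have Hn w : e x w = (w == u) by rewrite -in_set1 -Hu inE.
rewrite /parent; case: pickP => [v /= Hv|/(_ u)]; last by rewrite /= Hn eqxx.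
by split => // w; rewrite Hn => /eqP ->; move: Hv; rewrite Hn => /eqP ->.
Qed.

Lemma parent_in x : x \notin s -> parent x \in s.
Proof.
move=> Hx; apply/negPn/negP => Hp.
have [E1 U1] := parent_spec Hx; have [E2 U2] := parent_spec Hp.
have Hxp : x = parent (parent x) by apply: U2; rewrite eC.
have [v Hv] := exists_s.
have : (v == x) || (v == parent x).
  apply: (@closed_conn _ e [pred z | (z == x) || (z == parent x)] x); rewrite /= ?eqxx //;
    last by case: Ht => C _; apply: C.
  move=> a b Hab /orP [] /eqP Ha; subst a.
    by rewrite (U1 _ Hab) eqxx orbT.
  by rewrite (U2 _ Hab) -Hxp eqxx.
by case/orP => /eqP Hvx; subst v; rewrite Hv in Hx Hp.
Qed.

Lemma idx_lt x : idx x < size s.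
Proof.
rewrite /idx; case: ifP => H; rewrite index_mem //.
by apply: parent_in; rewrite H.
Qed.

Lemma sv_idx x : sv (idx x) = if x \in s then x else parent x.
Proof.
rewrite /sv /idx; case: ifP => H; rewrite nth_index //.
by apply: parent_in; rewrite H.
Qed.

Lemma idx_sv i : i < size s -> idx (sv i) = i.
Proof.
move=> Hi; rewrite /idx /sv mem_nth // index_uniq //; exact: uniq_s.
Qed.

Lemma sv_in i : i < size s -> sv i \in s.
Proof. by move=> Hi; rewrite /sv mem_nth. Qed.

Lemma leaf_notin w : leaf e w -> w \notin s.
Proof. by rewrite in_s /leaf /internal => /eqP ->. Qed.

Lemma notin_leaf w : w \notin s -> leaf e w.
Proof. by move/deg_notin; rewrite /leaf => ->. Qed.

Lemma edge_ss x y : e x y -> x \in s -> y \in s ->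
  (idx y = (idx x).+1) \/ (idx x = (idx y).+1).
Proof.
move=> Hxy Hx Hy.
have := s_edge (idx_lt x) (idx_lt y).
rewrite -/(sv (idx x)) -/(sv (idx y)) !sv_idx Hx Hy Hxy.
by case/esym/orP => /eqP ->; auto.
Qed.

Lemma edge_sn x y : e x y -> y \notin s -> idx y = idx x /\ x \in s.
Proof.
move=> Hxy Hy; have [E U] := parent_spec Hy.
have Hp : x = parent y by apply: U; rewrite eC.
have Hx : x \in s by rewrite Hp parent_in.
by rewrite /idx Hx (negbTE Hy) -Hp.
Qed.

Section Cuts.
Variable c : seq bool.

Definition bid i := count id (take i c).

Lemma bidS i : bid i.+1 = bid i + nth false c i.
Proof.
rewrite /bid; elim: c i => [|h t IH] [|i] /=; rewrite ?take0 ?addn0 ?add0n //.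
by rewrite IH addnA.
Qed.

Lemma bid_mono i d : bid i <= bid (i + d).
Proof. by elim: d => [|d IH]; rewrite ?addn0 // addnS bidS (leq_trans IH) ?leq_addr. Qed.

Definition keep x y := ~~ [&& x \in s, y \in s & nth false c (minn (idx x) (idx y))].

Lemma keepC x y : keep x y = keep y x.
Proof. by rewrite /keep minnC; case: (x \in s); case: (y \in s). Qed.

Definition Ac := [set [set x; y] | x in [set: V], y in [set z | e x z && keep x z]].

Lemma inAc x y : ([set x; y] \in Ac) = e x y && keep x y.
Proof.
apply/imset2P/idP.
  case=> a b _; rewrite inE => /andP[H1 H2] /set2_eqP [[-> ->]|[-> ->]].
    by rewrite H1.
  by rewrite eC keepC H1.
by move=> H; exists x y; rewrite ?inE.
Qed.

Definition R := sub_rel Ac.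

Lemma RE x y : R x y = e x y && keep x y.
Proof. exact: inAc. Qed.

Lemma R_sym : symmetric R.
Proof. by move=> x y; rewrite !RE eC keepC. Qed.

Lemma R_g x y : R x y -> bid (idx x) = bid (idx y).
Proof.
rewrite RE => /andP[Hxy Hk].
case Hx: (x \in s); case Hy: (y \in s).
- move: Hk; rewrite /keep Hx Hy /=.
  case: (edge_ss Hxy Hx Hy) => ->; rewrite ?minnSn ?minSnn => /negbTE Hc;
    by rewrite bidS Hc addn0.
- by case: (edge_sn Hxy (negbT Hy)) => ->.
- have Hyx : e y x by rewrite eC.
  by case: (edge_sn Hyx (negbT Hx)) => ->.
- by case: (edge_sn Hxy (negbT Hy)); rewrite Hx.
Qed.

Lemma conn_g x y : connect R x y -> bid (idx x) = bid (idx y).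
Proof.
move=> H; apply/eqP; apply: (@closed_conn _ R [pred z | bid (idx x) == bid (idx z)] x y) => //=.
by move=> a b /R_g -> .
Qed.

Lemma conn_sv x : connect R x (sv (idx x)).
Proof.
rewrite sv_idx; case: ifP => Hx; first exact: connect0.
apply: connect1; rewrite RE; have [E _] := parent_spec (negbT Hx).
by rewrite E /keep Hx.
Qed.

Lemma conn_chain i d : i + d < size s -> bid i = bid (i + d) ->
  connect R (sv i) (sv (i + d)).
Proof.
elim: d i => [|d IH] i; first by rewrite addn0 => _ _; exact: connect0.
move=> Hlt Hb.
have Hc : nth false c i = false.
  move: (bid_mono i.+1 d); rewrite addSnnS -Hb bidS.
  by case: (nth false c i) => //; rewrite addn1 ltnn.
have Hi : i.+1 < size s by apply: leq_ltn_trans Hlt; rewrite addnS ltnS leq_addr.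

apply: (connect_trans (y := sv i.+1)).
  apply: connect1; rewrite RE s_edge ?eqxx //; last exact: ltnW.
  by rewrite /keep !sv_in ?idx_sv ?minnSn ?Hc //; exact: ltnW.
rewrite -addSnnS; apply: IH; first by rewrite addSnnS.
by rewrite addSnnS -Hb bidS Hc addn0.
Qed.

Lemma connR x y : connect R x y = (bid (idx x) == bid (idx y)).
Proof.
apply/idP/eqP; first exact: conn_g.
have Hsym := sym_connect_sym R_sym.
wlog Hle : x y / idx x <= idx y.
  move=> W; case: (leqP (idx x) (idx y)) => H; first exact: W.
  by move=> Hb; rewrite Hsym; apply: W => //; exact: ltnW.
move=> Hb.
apply: (connect_trans (conn_sv x)).
rewrite Hsym; apply: (connect_trans (conn_sv y)); rewrite Hsym.
rewrite -(subnKC Hle); apply: conn_chain; rewrite subnKC //; exact: idx_lt.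
Qed.

Hypothesis Hc : size c = (size s).-1.

Definition F j := [set y | bid (idx y) == j].

Lemma bid_le i : bid i <= count id c.
Proof. by rewrite /bid -{2}(cat_take_drop i c) count_cat leq_addr. Qed.

Lemma size_s_pos : 0 < size s.
Proof. by move: s_nil; case: s. Qed.

Lemma bid_surj j : j <= count id c -> exists2 i, i < size s & bid i = j.
Proof.
move=> /count_take_surj [i Hi Hb]; exists i => //.
by move: Hi; rewrite Hc; case: (size s) size_s_pos.
Qed.

Lemma compE x : [set y | connect R x y] = F (bid (idx x)).
Proof. by apply/setP => y; rewrite !inE connR eq_sym. Qed.

Lemma perm_comps : perm_eq (enum (components Ac)) [seq F j | j <- iota 0 (count id c).+1].
Proof.
apply: uniq_perm; first exact: enum_uniq.
  rewrite map_inj_in_uniq ?iota_uniq // => j1 j2.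
  rewrite !mem_iota !add0n !ltnS => H1 _ E.
  have [i Hi Hb] := bid_surj H1.
  have : sv i \in F j1 by rewrite inE idx_sv // Hb.
  by rewrite E inE idx_sv // Hb => /eqP.
move=> C; rewrite mem_enum; apply/imsetP/mapP.
  case=> x _ ->; exists (bid (idx x)); last exact: compE.
  by rewrite mem_iota add0n ltnS bid_le.
case=> j; rewrite mem_iota add0n ltnS => /bid_surj [i Hi Hb] ->.
by exists (sv i) => //; rewrite compE idx_sv // Hb.
Qed.

Lemma card_idx i : i < size s -> #|[set y | idx y == i]| = nth 0 (beta e s) i.
Proof.
move=> Hi; rewrite /beta (nth_map x0) // -/(sv i).
have -> : [set y | idx y == i] = sv i |: [set w | e (sv i) w & leaf e w].
  apply/setP => y; rewrite !inE.
  case Hy: (y \in s).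
    have -> : leaf e y = false by apply/negP => /leaf_notin; rewrite Hy.
    rewrite andbF orbF; apply/eqP/eqP => [<-|->]; last exact: idx_sv.
    by rewrite sv_idx Hy.
  have -> : leaf e y by apply: notin_leaf; rewrite Hy.
  have -> : (y == sv i) = false by apply/negP => /eqP E; move: (sv_in Hi); rewrite -E Hy.
  have [E U] := parent_spec (negbT Hy).
  rewrite andbT /=; apply/eqP/idP => [<-|H].
    by rewrite sv_idx Hy eC.
  have Hp : sv i = parent y by apply: U; rewrite eC.
  by rewrite -(idx_sv Hi) Hp /idx Hy (parent_in (negbT Hy)).
rewrite cardsU1 inE.
have -> : leaf e (sv i) = false by apply/negP => /leaf_notin; rewrite sv_in.
by rewrite andbF add1n.
Qed.

Lemma card_F j : #|F j| = blocksum (beta e s) c j.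
Proof.
rewrite /blocksum size_map -sum1_card.
rewrite (partition_big (fun y => Ordinal (idx_lt y)) (fun i : 'I_(size s) => bid i == j)) /=;
  last by move=> y; rewrite inE.
rewrite big_mkcond /= big_mkord; apply: eq_bigr => i _.
rewrite -/(bid i); case: ifP => // /eqP Hb.
rewrite -card_idx // -sum1_card; apply: eq_bigl => y.
rewrite !inE -val_eqE /=; apply/andP/idP => [[] //|/eqP Hy].
by rewrite Hy Hb.
Qed.

Lemma lambda_Ac : lambdaA Ac = sort geq (blocks (beta e s) c).
Proof.
rewrite /lambdaA (blocksE (c := c)); last by rewrite size_map.
  apply/perm_sortP.
  - by move=> a b; apply: leq_total.
  - by move=> a b d H1 H2; apply: leq_trans H2 H1.
  - by move=> a b /andP [H1 H2]; apply: anti_leq; apply/andP; split; [exact: H2|exact: H1].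
  rewrite (perm_trans (perm_map (fun C : {set V} => #|C|) perm_comps)) //.
  have E : (fun C : {set V} => #|C|) \o F =1 blocksum (beta e s) c by move=> j; exact: card_F.
  by rewrite -map_comp (eq_map E).
by move: s_nil; case: (s).
Qed.

End Cuts.

Lemma inedges x y : ([set x; y] \in edges e) = e x y.
Proof.
apply/imset2P/idP.
  case=> a b _; rewrite inE => H /set2_eqP [[-> ->]|[-> ->]] //.
  by rewrite eC.
by move=> H; exists x y; rewrite ?inE.
Qed.

Lemma set2C (x y : V) : [set x; y] = [set y; x].
Proof. by rewrite setUC. Qed.

Lemma Ac_sub c : Ac c \subset edges e.
Proof.
apply/subsetP => E /imset2P [a b _]; rewrite inE => /andP [H _] ->.
by rewrite inedges.
Qed.

Lemma in_Ac_sv c i : i.+1 < size s -> ([set sv i; sv i.+1] \in Ac c) = ~~ nth false c i.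
Proof.
move=> Hi; have Hi' : i < size s by apply: ltnW.
by rewrite inAc s_edge ?eqxx //= /keep !sv_in // !idx_sv // minnSn.
Qed.

Definition Act n (c : n.-tuple bool) := Ac (tval c).

Lemma Act_inj : injective (@Act (size s).-1).
Proof.
move=> c1 c2 E; apply: val_inj; apply: (@eq_from_nth _ false); first by rewrite !size_tuple.
move=> i; rewrite size_tuple => Hi.
have Hi' : i.+1 < size s by move: Hi; case: (size s).
by apply/negb_inj; rewrite -!in_Ac_sv //; move: E; rewrite /Act => ->.
Qed.

Lemma Ucoef_card la : 1 \notin la ->
  Ucoef e la = #|[set c : ((size s).-1).-tuple bool | sort geq (blocks (beta e s) c) == la]|.
Proof.
move=> H1; rewrite /Ucoef -(card_imset _ Act_inj).
apply: eq_card => A; rewrite [A \in [set _ in _ | _]]inE inE; apply/andP/imsetP.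
  case=> Hsub /eqP Hla.
  pose f := fun i => [set sv i; sv i.+1] \notin A.
  have Hsz : size (mkseq f (size s).-1) == (size s).-1 by rewrite size_mkseq.
  pose c := Tuple Hsz.
  have HA : A = Act c.
    rewrite /Act.
    have key : forall x y, e x y -> ([set x; y] \in A) = keep c x y.
      move=> x y.
      wlog Hx : x y / x \in s.
        move=> W Hxy; case Hx: (x \in s); first exact: W.
        have Hyx : e y x by rewrite eC.
        have [_ Hy] := edge_sn Hyx (negbT Hx).
        by rewrite set2C keepC; apply: W; rewrite // eC.
      move=> Hxy; case Hy: (y \in s).
        have Hsym : forall a b, e a b -> a \in s -> b \in s -> idx b = (idx a).+1 ->
            ([set a; b] \in A) = keep c a b.
          move=> a b Hab Ha Hb Hi.
          have Hi' : (idx a).+1 < size s by rewrite -Hi idx_lt.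
          rewrite /keep Ha Hb Hi minnSn /= nth_mkseq; last by move: Hi'; case: (size s).
          have Ea : sv (idx a) = a by rewrite sv_idx Ha.
          have Eb : sv (idx a).+1 = b by rewrite -Hi sv_idx Hb.
          by rewrite /f negbK Ea Eb.
        case: (edge_ss Hxy Hx Hy) => Hi; first exact: Hsym.
        by rewrite set2C keepC; apply: Hsym; rewrite // eC.
      rewrite /keep Hy andbF /=.
      apply/negP => Hn.
      have [_ U] := parent_spec (negbT Hy).
      have Hxp : x = parent y by apply: U; rewrite eC.
      have Hcomp : [set z | connect (sub_rel A) y z] = [set y].
        apply/setP => z; rewrite !inE; apply/idP/idP; last by move/eqP ->; exact: connect0.
        apply: (@closed_conn _ _ (pred1 y) y z); last by rewrite /= eqxx.
        move=> a b Hab /eqP Ha; subst a; exfalso.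
        have Hyb : e y b by rewrite -inedges; apply: (subsetP Hsub).
        by move: Hab; rewrite /sub_rel (U _ Hyb) -Hxp set2C.
      have : 1 \in lambdaA A.
        rewrite /lambdaA mem_sort; apply/mapP; exists [set y]; last by rewrite cards1.
        by rewrite mem_enum -Hcomp; apply: imset_f.
      by rewrite Hla (negbTE H1).
    apply/setP => E; apply/idP/idP => HE.
      have := subsetP Hsub _ HE; case/imset2P => x y _; rewrite inE => Hxy HE'.
      by move: HE; rewrite HE' key // inAc Hxy.
    case/imset2P: HE => x y _; rewrite inE => /andP [Hxy Hk] ->.
    by rewrite key.
  exists c => //; rewrite inE -Hla HA /Act lambda_Ac //; exact: size_tuple.
case=> c; rewrite inE => /eqP Hc ->; split; first exact: Ac_sub.
by rewrite /Act lambda_Ac ?Hc // size_tuple.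
Qed.

End Cat.


Lemma beta_ge2 (V : finType) (e : rel V) s :
  is_spine e s -> proper_caterpillar e -> all (fun x => 2 <= x) (beta e s).
Proof.
move=> Hs Hp; rewrite /beta all_map; apply/allP => v Hv /=.
rewrite ltnS; apply/card_gt0P.
have [w Hw] := Hp v (eq_ind _ _ Hv _ (in_s Hs v)).
by exists w; rewrite inE.
Qed.

Lemma all_pos b : all (fun x => 2 <= x) b -> all (fun x => 0 < x) b.
Proof. by apply: sub_all => x /ltnW. Qed.

Lemma Lcoef_card_beta (V : finType) (e : rel V) s la :
  is_spine e s -> proper_caterpillar e ->
  Lcoef (beta e s) la =
  #|[set c : ((size s).-1).-tuple bool | sort geq (blocks (beta e s) c) == la]|.
Proof.
move=> Hs Hp; rewrite Lcoef_card; last exact: all_pos (beta_ge2 Hs Hp).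
by have -> : size (beta e s) = size s by rewrite size_map.
Qed.

Lemma Lcoef_zero (V : finType) (e : rel V) s la :
  is_spine e s -> proper_caterpillar e -> 1 \in la -> Lcoef (beta e s) la = 0.
Proof.
move=> Hs Hp H1; rewrite Lcoef_card_beta //; apply: eq_card0 => c; rewrite inE.
apply/negP => /eqP Hla; move: H1; rewrite -Hla mem_sort => H.
have := blocks_ge c (beta_ge2 Hs Hp); move/allP/(_ _ H).
done.
Qed.

Theorem corollary2p4 (V V' : finType) (e : rel V) (e' : rel V') :
  simple_graph e -> simple_graph e' ->
  is_tree e -> is_tree e' ->
  caterpillar e -> proper_caterpillar e -> caterpillar e' -> proper_caterpillar e' ->
  (forall la : seq nat, Ucoef e la = Ucoef e' la) ->
  forall b b' : seq nat, Phi e b -> Phi e' b' ->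
  forall la : seq nat, Lcoef b la = Lcoef b' la.
Proof.
move=> Hg Hg' Ht Ht' _ Hp _ Hp' HU b b' [s [Hs ->]] [s' [Hs' ->]] la.
case: (boolP (1 \in la)) => H1.
  by rewrite (Lcoef_zero Hs Hp H1) (Lcoef_zero Hs' Hp' H1).
have [x0 _] := exists_s Hs; have [x0' _] := exists_s Hs'.
rewrite (Lcoef_card_beta _ Hs Hp) (Lcoef_card_beta _ Hs' Hp').
by rewrite -(Ucoef_card Hg Ht Hs x0 H1) -(Ucoef_card Hg' Ht' Hs' x0' H1).
Qed.
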